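(* Let $\Gamma_1$ and $\Gamma_2$ be signed graphs whose signed subdivision graphs $S(\Gamma_1)$ and $S(\Gamma_2)$ are noncospectral and equienergetic. Let $p$ be a positive integer and $k\in\{p,p-1\}$. Then (i) $S_p(\Gamma_1)$ and $S_p(\Gamma_2)$ are noncospectral and equienergetic; (ii) $S_p^k(\Gamma_1)$ and $S_p^k(\Gamma_2)$ are noncospectral and equienergetic.
   Context: A signed graph $\Gamma=(G,\sigma)$ is a simple graph $G$ with a sign function $\sigma:E(G)\to\{1,-1\}$; $A(\Gamma)$ has $(i,j)$ entry $\sigma(v_iv_j)$ if $v_iv_j\in E(G)$ and $0$ otherwise. The energy of a signed graph is the sum of the absolute values of its adjacency eigenvalues; two signed graphs are equienergetic if they have equal energy, and noncospectral if their adjacency spectra (with multiplicities) differ. Orientation: fix $\vartheta(v,e)\in\{1,-1\}$ for each vertex $v$ incident with edge $e$, such that for every edge $e=vw$, $\vartheta(v,e)\vartheta(w,e)=-\sigma(e)$. $S_p(\Gamma)$ ($p\ge1$): vertex set $V(G)\cup\{e_j^{(t)}:1\le j\le m,1\le t\le p\}$, edges exactly $v\,e_j^{(t)}$ for $v$ an end of $e_j$, with sign $\vartheta(v,e_j)$; $S(\Gamma)=S_1(\Gamma)$ is the signed subdivision graph. $S_p^k(\Gamma)$: vertex set $\{v_i^{(s)}:1\le i\le n,0\le s\le p\}\cup\{e_j^{(t)}:1\le j\le m,0\le t\le k\}$, edges exactly $v_i^{(s)}e_j^{(t)}$ for $v_i$ an end of $e_j$, with sign $\vartheta(v_i,e_j)$.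 *)

(* Defs.v *)
From mathcomp Require Import all_boot all_order all_algebra all_field.
Set Implicit Arguments. Unset Strict Implicit. Unset Printing Implicit Defensive.
Import Order.TTheory GRing.Theory Num.Theory.
Local Open Scope ring_scope.

(* Matrices are taken over algC (algebraically closed), so that the
   characteristic polynomial splits; the spectrum is the sequence of roots
   of the characteristic polynomial (eigenvalues with multiplicities). *)
Definition spectrum (N : nat) (A : 'M[algC]_N) : seq algC :=
  sval (closed_field_poly_normal (char_poly A)).

Definition energy (N : nat) (A : 'M[algC]_N) : algC :=
  \sum_(z <- spectrum A) `|z|.

(* Weighted (signed) adjacency on an arbitrary finite vertex type V:
   w x y is the signed adjacency entry (0 = no edge). The adjacency matrix
   is obtained by listing V via enum_val. *)
Definition adjmx (V : finType) (w : V -> V -> int) : 'M[algC]_#|V| :=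
  \matrix_(i, j) (w (enum_val i) (enum_val j))%:~R.

Definition cospectral (V W : finType) (w1 : V -> V -> int) (w2 : W -> W -> int) :=
  perm_eq (spectrum (adjmx w1)) (spectrum (adjmx w2)).

Definition equienergetic (V W : finType) (w1 : V -> V -> int) (w2 : W -> W -> int) :=
  energy (adjmx w1) = energy (adjmx w2).

Record signed_graph := SignedGraph {
  sg_n : nat;
  sg_m : nat;
  sg_end1 : 'I_sg_m -> 'I_sg_n;
  sg_end2 : 'I_sg_m -> 'I_sg_n;
  sg_sign : 'I_sg_m -> int
}.
Arguments sg_end1 : clear implicits.
Arguments sg_end2 : clear implicits.
Arguments sg_sign : clear implicits.

Definition wf_signed_graph (G : signed_graph) : Prop :=
  (forall e, sg_end1 G e != sg_end2 G e) /\
  (forall e f,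
      [set sg_end1 G e; sg_end2 G e] = [set sg_end1 G f; sg_end2 G f] -> e = f) /\
  (forall e, sg_sign G e = 1 \/ sg_sign G e = -1).

Definition incident (G : signed_graph) (v : 'I_(sg_n G)) (e : 'I_(sg_m G)) : bool :=
  (v == sg_end1 G e) || (v == sg_end2 G e).

(* An orientation: theta v e in {1,-1} for v incident with e, and
   theta(v,e) theta(w,e) = - sigma(e) for e = vw. Values at non-incident
   pairs are irrelevant. *)
Definition orientation (G : signed_graph)
    (theta : 'I_(sg_n G) -> 'I_(sg_m G) -> int) : Prop :=
  forall e,
    (theta (sg_end1 G e) e = 1 \/ theta (sg_end1 G e) e = -1) /\
    (theta (sg_end2 G e) e = 1 \/ theta (sg_end2 G e) e = -1) /\
    theta (sg_end1 G e) e * theta (sg_end2 G e) e = - sg_sign G e.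

(* S_p(Gamma): vertices V(G) + {e_j^(t) : j, t in 1..p} (t indexed by 'I_p). *)
Definition Sp_vertex (G : signed_graph) (p : nat) : finType :=
  ('I_(sg_n G) + ('I_(sg_m G) * 'I_p))%type.

Definition Sp_adj (G : signed_graph) (theta : 'I_(sg_n G) -> 'I_(sg_m G) -> int)
    (p : nat) (x y : Sp_vertex G p) : int :=
  match x, y with
  | inl v, inr (e, _) => if incident v e then theta v e else 0
  | inr (e, _), inl v => if incident v e then theta v e else 0
  | _, _ => 0
  end.

Arguments Sp_adj {G} theta p x y.

Definition S_adj (G : signed_graph) (theta : 'I_(sg_n G) -> 'I_(sg_m G) -> int) :=
  Sp_adj theta 1.

(* S_p^k(Gamma): vertices v_i^(s) (0 <= s <= p) and e_j^(t) (0 <= t <= k). *)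
Definition Spk_vertex (G : signed_graph) (p k : nat) : finType :=
  (('I_(sg_n G) * 'I_p.+1) + ('I_(sg_m G) * 'I_k.+1))%type.

Definition Spk_adj (G : signed_graph) (theta : 'I_(sg_n G) -> 'I_(sg_m G) -> int)
    (p k : nat) (x y : Spk_vertex G p k) : int :=
  match x, y with
  | inl (v, _), inr (e, _) => if incident v e then theta v e else 0
  | inr (e, _), inl (v, _) => if incident v e then theta v e else 0
  | _, _ => 0
  end.
Arguments Spk_adj {G} theta p k x y.

(* Main.v *)
Require Import Defs.
From mathcomp Require Import all_boot all_order all_algebra all_field ring zify.
Set Implicit Arguments. Unset Strict Implicit. Unset Printing Implicit Defensive.
Import Order.TTheory GRing.Theory Num.Theory.
Local Open Scope ring_scope.
Local Open Scope sesquilinear_scope.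


Lemma sylvester (R : comNzRingType) a b (X : 'M[R]_(a,b)) (Y : 'M[R]_(b,a)) :
  'X^b * char_poly (X *m Y) = 'X^a * char_poly (Y *m X).
Proof.
set XX := map_mx polyC X; set YY := map_mx polyC Y.
pose B := block_mx ('X%:M : 'M_a) XX YY (1%:M : 'M_b).
have h1 : B *m block_mx 1%:M 0 (- YY) 1%:M =
          block_mx (char_poly_mx (X *m Y)) XX 0 1%:M.
  rewrite mulmx_block !mulmx1 !mulmx0 !mul1mx !add0r mulmxN addrN.
  by rewrite /char_poly_mx map_mxM.
have h2 : block_mx 1%:M 0 (- YY) ('X%:M) *m B =
          block_mx ('X%:M) XX 0 (char_poly_mx (Y *m X)).
  rewrite mulmx_block !mul1mx !mul0mx !addr0 mulNmx mulmx1.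
  rewrite mul_mx_scalar mul_scalar_mx addNr.
  by rewrite /char_poly_mx map_mxM addrC mulNmx.
have d1 := congr1 determinant h1; rewrite det_mulmx det_lblock det_ublock !det1 !mulr1 in d1.
have d2 := congr1 determinant h2; rewrite det_mulmx det_lblock det_ublock det1 mul1r in d2.
by rewrite /char_poly -d1 !det_scalar in d2 *.
Qed.



Lemma spec_prod N (A : 'M[algC]_N) :
  char_poly A = \prod_(z <- spectrum A) ('X - z%:P).
Proof.
rewrite /spectrum; case: (closed_field_poly_normal (char_poly A)) => r /= Hr.
by rewrite {1}Hr (monicP (char_poly_monic A)) scale1r.
Qed.

Lemma spec_perm N (A : 'M[algC]_N) s :
  char_poly A = \prod_(z <- s) ('X - z%:P) -> perm_eq (spectrum A) s.
Proof. by move=> H; apply: prod_XsubC_eq; rewrite -spec_prod. Qed.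

Lemma size_spec N (A : 'M[algC]_N) : size (spectrum A) = N.
Proof.
have := size_char_poly A; rewrite spec_prod size_prod_XsubC.
by case.
Qed.

Lemma Xn_neq0 k : ('X^k : {poly algC}) != 0.
Proof. by rewrite monic_neq0 // monicXn. Qed.

Lemma char_similar N (A P : 'M[algC]_N) : P \in unitmx ->
  char_poly (invmx P *m A *m P) = char_poly A.
Proof.
move=> uP; apply: (mulfI (Xn_neq0 N)).
by rewrite sylvester mulmxA mulmxV // mul1mx.
Qed.

Definition dseq N (d : 'rV[algC]_N) := [seq d 0 i | i <- enum 'I_N].

Lemma char_diag N (d : 'rV[algC]_N) :
  char_poly (diag_mx d) = \prod_(z <- dseq d) ('X - z%:P).
Proof.
rewrite char_poly_trig ?diag_mx_is_trig // /dseq big_map big_enum /=.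
by apply: eq_bigr => i _; rewrite mxE eqxx mulr1n.
Qed.


Lemma prod_nseq0 k : \prod_(z <- nseq k (0:algC)) ('X - z%:P) = 'X^k.
Proof.
elim: k => [|k IH]; first by rewrite big_nil expr0.
by rewrite /= big_cons IH subr0 exprS.
Qed.

Lemma spec_blow N M (A : 'M[algC]_N) (A' : 'M[algC]_M) c :
  A \is normalmx -> (N <= M)%N ->
  'X^N * char_poly A' = 'X^M * char_poly (c *: A) ->
  exists d : 'rV[algC]_N,
    [/\ perm_eq (spectrum A) (dseq d),
        perm_eq (spectrum A') (nseq (M - N) 0 ++ map (fun z => c * z) (dseq d)) &
        \tr (A *m A) = \sum_(z <- dseq d) z ^+ 2].
Proof.
move=> /orthomx_spectralP HA leNM HX.
set P := spectralmx A in HA; set d := spectral_diag A in HA.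
have uP : P \in unitmx by exact: spectral_unit.
exists d; split.
- by apply: spec_perm; rewrite HA char_similar // char_diag.
- apply: spec_perm; apply: (mulfI (Xn_neq0 N)); rewrite HX.
  have -> : c *: A = invmx P *m diag_mx (c *: d) *m P.
    rewrite HA scalemxAl scalemxAr; congr (_ *m _ *m _).
    by apply/matrixP => i j; rewrite !mxE mulrnAr.
  rewrite char_similar // char_diag big_cat prod_nseq0 /= mulrA -exprD subnKC //.
  by congr (_ * _); rewrite /dseq -map_comp big_map big_map; apply: eq_bigr => i _; rewrite mxE.
- rewrite HA !mulmxA mulmxK // mxtrace_mulC !mulmxA mulmxV // mul1mx.
  rewrite /mxtrace /dseq big_map big_enum /=; apply: eq_bigr => i _.
  by rewrite mul_diag_mx !mxE eqxx mulr1n expr2.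
Qed.


Lemma sum_enum_val (V : finType) (F : V -> algC) :
  \sum_(k < #|V|) F (enum_val k) = \sum_(x : V) F x.
Proof. by rewrite (big_enum_val F). Qed.

Lemma blowup (V W : finType) (w : V -> V -> int) (w' : W -> W -> int)
    (pi : W -> V) (s : V -> algC) (c : algC) :
  (forall x y, w' x y = w (pi x) (pi y)) ->
  (forall x, s x != 0) ->
  (forall x y, w x y != 0 -> #|[pred y' | pi y' == y]|%:R * s y / s x = c) ->
  'X^#|V| * char_poly (adjmx w') = 'X^#|W| * char_poly (c *: adjmx w).
Proof.
move=> Hw Hs Hc.
pose X : 'M[algC]_(#|W|, #|V|) :=
  \matrix_(i, j) ((pi (enum_val i) == enum_val j)%:R * s (enum_val j)).
pose Y : 'M[algC]_(#|V|, #|W|) :=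
  \matrix_(i, j) ((s (enum_val i))^-1 * (w (enum_val i) (pi (enum_val j)))%:~R).
have -> : adjmx w' = X *m Y.
  apply/matrixP => i j; rewrite !mxE /X /Y; under eq_bigr do rewrite !mxE.
  rewrite (sum_enum_val (fun x => (pi (enum_val i) == x)%:R * s x *
       ((s x)^-1 * (w x (pi (enum_val j)))%:~R))).
  rewrite (bigD1 (pi (enum_val i))) //= big1 ?addr0.
    by rewrite eqxx mul1r mulrA mulfV // mul1r Hw.
  by move=> x /negbTE; rewrite eq_sym => ->; rewrite mul0r mul0r.
have -> : c *: adjmx w = Y *m X.
  apply/matrixP => i j; rewrite !mxE /X /Y; under eq_bigr do rewrite !mxE.
  rewrite (sum_enum_val (fun y' => (s (enum_val i))^-1 * (w (enum_val i) (pi y'))%:~R *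
       ((pi y' == enum_val j)%:R * s (enum_val j)))).
  rewrite (bigID (fun y' => pi y' == enum_val j)) /= [X in _ + X]big1 ?addr0; last first.
    by move=> y' /negbTE ->; rewrite mul0r mulr0.
  rewrite (eq_bigr (fun _ => (s (enum_val i))^-1 * (w (enum_val i) (enum_val j))%:~R *
       s (enum_val j))); last by move=> y' /eqP ->; rewrite eqxx mul1r.
  rewrite sumr_const.
  have [w0|wn0] := eqVneq (w (enum_val i) (enum_val j)) 0.
    by rewrite w0 mulr0 mulr0 mul0r mul0rn.
  rewrite -(Hc _ _ wn0) -mulr_natl.
  rewrite -mulr_natl; ring.
exact: sylvester.
Qed.

Lemma bip_blowup (A B W : finType) (w : A + B -> A + B -> int) (w' : W -> W -> int)
    (pi : W -> A + B) (dV dE : nat) :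
  (0 < dV)%N -> (0 < dE)%N ->
  (forall x y, w' x y = w (pi x) (pi y)) ->
  (forall a a', w (inl a) (inl a') = 0) -> (forall b b', w (inr b) (inr b') = 0) ->
  (forall v, #|[pred y' | pi y' == inl v]| = dV) ->
  (forall e, #|[pred y' | pi y' == inr e]| = dE) ->
  'X^#|{: A + B}| * char_poly (adjmx w') =
  'X^#|W| * char_poly (sqrtC (dV * dE)%:R *: adjmx w).
Proof.
move=> dV0 dE0 Hw HA HB HcV HcE.
set c := sqrtC _.
have dVn : (dV%:R : algC) != 0 by rewrite pnatr_eq0 -lt0n.
have dEn : (dE%:R : algC) != 0 by rewrite pnatr_eq0 -lt0n.
have cn : c != 0 by rewrite sqrtC_eq0 pnatr_eq0 -lt0n muln_gt0 dV0.
have c2 : c * c = dV%:R * dE%:R by rewrite -expr2 sqrtCK natrM.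
apply: (blowup (s := fun x => match x with inl _ => 1 | inr _ => c / dE%:R end)) => //.
  by case=> [a|b] /=; rewrite ?oner_eq0 ?mulf_neq0 // invr_eq0.
case=> [a|b] [a'|b'].
- by rewrite HA eqxx.
- by move=> _; rewrite HcE; field.
- move=> _; rewrite HcV; apply: (mulfI cn); rewrite c2; field.
  by rewrite cn dEn.
- by rewrite HB eqxx.
Qed.


Lemma adjmx_normal (V : finType) (w : V -> V -> int) :
  (forall x y, w x y = w y x) -> adjmx w \is normalmx.
Proof.
move=> Hs; have H : (adjmx w) ^t* = adjmx w.
  by apply/matrixP => i j; rewrite !mxE rmorph_int Hs.
by apply/normalmxP; rewrite H.
Qed.

Lemma Sp_sym G theta p x y : @Sp_adj G theta p x y = Sp_adj theta p y x.
Proof. by case: x => [v|[e t]]; case: y => [v'|[e' t']]. Qed.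

Lemma Spk_sym G theta p k x y : @Spk_adj G theta p k x y = Spk_adj theta p k y x.
Proof. by case: x => [[v s]|[e t]]; case: y => [[v' s']|[e' t']]. Qed.

Lemma inc_sum G (theta : 'I_(sg_n G) -> 'I_(sg_m G) -> int) e : wf_signed_graph G -> orientation theta ->
  \sum_(a : 'I_(sg_n G)) (if incident a e then theta a e else 0) ^+ 2 = 2 :> int.
Proof.
move=> [Hne _] Hor; have [[h1|h1] [[h2|h2] _]] := Hor e;
rewrite (bigD1 (sg_end1 G e)) //= (bigD1 (sg_end2 G e)) /=; try by rewrite eq_sym Hne.
all: rewrite big1 ?addr0 /incident ?eqxx ?orbT ?h1 ?h2 //.
all: by move=> a /andP [na1 na2]; rewrite (negbTE na1) (negbTE na2).
Qed.

Lemma sum2_enum_val (V : finType) (F : V -> V -> algC) :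
  \sum_(i < #|V|) \sum_(j < #|V|) F (enum_val i) (enum_val j) = \sum_(x : V) \sum_(y : V) F x y.
Proof.
rewrite (sum_enum_val (fun x => \sum_(j < #|V|) F x (enum_val j))).
by apply: eq_bigr => x _; rewrite (sum_enum_val (F x)).
Qed.

Lemma trace_S G (theta : 'I_(sg_n G) -> 'I_(sg_m G) -> int) : wf_signed_graph G -> orientation theta ->
  \tr (adjmx (S_adj theta) *m adjmx (S_adj theta)) = (4 * sg_m G)%:R.
Proof.
move=> Hwf Hor.
rewrite /mxtrace.
under eq_bigr => i _ do rewrite mxE.
under eq_bigr => i _ do under eq_bigr => j _ do rewrite !mxE -intrM.
rewrite (sum2_enum_val (fun x y => (S_adj theta x y * S_adj theta y x)%:~R)).
under eq_bigr do rewrite -rmorph_sum.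
rewrite -rmorph_sum.
suff -> : \sum_i \sum_i0 S_adj theta i i0 * S_adj theta i0 i = (4 * sg_m G)%:R :> int.
  by rewrite rmorph_nat.
set f := fun (a : 'I_(sg_n G)) (e : 'I_(sg_m G)) => if incident a e then theta a e else 0.
rewrite big_sumType /=.
rewrite (eq_bigr (fun a => \sum_(b : 'I_(sg_m G) * 'I_1) (f a b.1) ^+ 2)); last first.
  move=> a _; rewrite big_sumType /= big1 ?add0r //.
  by apply: eq_bigr => -[e t] _; rewrite expr2.
rewrite [X in _ + X](eq_bigr (fun b => \sum_a (f a b.1) ^+ 2)); last first.
  move=> -[e t] _; rewrite big_sumType /= [X in _ + X]big1 ?addr0; last by move=> ? _; rewrite mul0r.
  by apply: eq_bigr => a _; rewrite expr2.
rewrite exchange_big /= -mulr2n.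
rewrite -(pair_big predT predT (fun e (t : 'I_1) => \sum_a f a e ^+ 2)) /=.
under eq_bigr => e _ do rewrite big_ord1 inc_sum //.
rewrite sumr_const card_ord -mulrnA.
rewrite -(natz 2) -mulr_natr mul1r -mulrnA; congr (_%:R); lia.
Qed.


Lemma card_fst (M P : finType) (m : M) : #|[pred q : M * P | q.1 == m]| = #|P|.
Proof.
have -> : #|[pred q : M * P | q.1 == m]| = #|setX [set m] [set: P]|.
  by apply: eq_card => q; rewrite !inE andbT.
by rewrite cardsX cards1 cardsT mul1n.
Qed.

Definition piS (A A' M P : finType) (f : A' -> A) (y : A' + M * P) : A + M * 'I_1 :=
  match y with inl a => inl (f a) | inr q => inr (q.1, ord0) end.

Lemma fiber_inl (A A' M P : finType) (f : A' -> A) (v : A) :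
  #|[pred y | @piS A A' M P f y == inl v]| = #|[pred a | f a == v]|.
Proof.
rewrite -!sum1_card big_sumType /= [X in (_ + X)%N]big_pred0 ?addn0 //.
Qed.

Lemma fiber_inr (A A' M P : finType) (f : A' -> A) (b : M * 'I_1) :
  #|[pred y | @piS A A' M P f y == inr b]| = #|P|.
Proof.
rewrite -(card_fst P b.1) -!sum1_card big_sumType /= big_pred0 ?add0n //.
apply: eq_bigl => q; case: b => b1 b2; rewrite (ord1 b2) /=.
by rewrite !inE /= (inj_eq (@inr_inj _ _)) xpair_eqE andbT.
Qed.


Lemma count_L (z : nat) (c : algC) (D : seq algC) (P : pred algC) :
  count P (nseq z (0:algC) ++ map (fun y => c * y) D) =
  addn (muln (P (0:algC)) z) (count (fun y => P (c * y)) D).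
Proof. by rewrite count_cat count_nseq count_map. Qed.

Lemma sum_L (z : nat) (c : algC) (D : seq algC) (F : algC -> algC) :
  F 0 = 0 ->
  \sum_(x <- nseq z 0 ++ map (fun y => c * y) D) F x = \sum_(y <- D) F (c * y).
Proof.
move=> F0; rewrite big_cat big_map /= big1_seq ?add0r // => x /andP [_].
by move/nseqP => [-> _].
Qed.

Lemma transfer (V1 V2 W1 W2 : finType) (w1 : V1 -> V1 -> int) (w2 : V2 -> V2 -> int)
    (w1' : W1 -> W1 -> int) (w2' : W2 -> W2 -> int) (c : algC) (m1 m2 : nat) :
  0 < c ->
  (forall x y, w1 x y = w1 y x) -> (forall x y, w2 x y = w2 y x) ->
  \tr (adjmx w1 *m adjmx w1) = (4 * m1)%:R ->
  \tr (adjmx w2 *m adjmx w2) = (4 * m2)%:R ->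
  (#|V1| <= #|W1|)%N -> (#|V2| <= #|W2|)%N ->
  'X^#|V1| * char_poly (adjmx w1') = 'X^#|W1| * char_poly (c *: adjmx w1) ->
  'X^#|V2| * char_poly (adjmx w2') = 'X^#|W2| * char_poly (c *: adjmx w2) ->
  (m1 = m2 -> #|W1| = #|W2| -> #|V1| = #|V2|) ->
  ~ cospectral w1 w2 -> equienergetic w1 w2 ->
  ~ cospectral w1' w2' /\ equienergetic w1' w2'.
Proof.
move=> c0 sy1 sy2 tr1 tr2 le1 le2 X1 X2 Hsz ncos eqe.
have cn : c != 0 by rewrite gt_eqF.
have [d1 [p1 p1' t1]] := spec_blow (adjmx_normal sy1) le1 X1.
have [d2 [p2 p2' t2]] := spec_blow (adjmx_normal sy2) le2 X2.
have En (N M : nat) (A : 'M[algC]_N) (A' : 'M[algC]_M) (d : 'rV_N) :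
    perm_eq (spectrum A) (dseq d) ->
    perm_eq (spectrum A') (nseq (M - N) 0 ++ map (fun z => c * z) (dseq d)) ->
    energy A' = c * energy A.
  move=> pA pA'; rewrite /energy (perm_big _ pA) (perm_big _ pA') sum_L ?normr0 //.
  by rewrite mulr_sumr; apply: eq_bigr => y _; rewrite normrM gtr0_norm.
split; last first.
  by rewrite /equienergetic (En _ _ _ _ _ p1 p1') (En _ _ _ _ _ p2 p2') eqe.
move=> cos'; apply: ncos; rewrite /cospectral in cos'.
have hW : #|W1| = #|W2|.
  by have := perm_size cos'; rewrite !size_spec.
have hm : m1 = m2.
  have : \sum_(z <- nseq (#|W1| - #|V1|) 0 ++ map (fun z => c * z) (dseq d1)) z ^+ 2 =
         \sum_(z <- nseq (#|W2| - #|V2|) 0 ++ map (fun z => c * z) (dseq d2)) z ^+ 2.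
    by apply: perm_big; apply: (perm_trans _ (perm_trans cos' p2')); rewrite perm_sym.
  rewrite !sum_L ?expr0n //.
  have E (D : seq algC) : \sum_(y <- D) (c * y) ^+ 2 = c ^+ 2 * \sum_(y <- D) y ^+ 2.
    by rewrite mulr_sumr; apply: eq_bigr => y _; rewrite exprMn.
  rewrite !E -t1 -t2 tr1 tr2 => /(mulfI (expf_neq0 2 cn)) /eqP.
  rewrite eqr_nat => /eqP; lia.
have hV := Hsz hm hW.
rewrite /cospectral (perm_trans p1) // perm_sym (perm_trans p2) //.
have cL : perm_eq (nseq (#|W1| - #|V1|) 0 ++ map (fun z => c * z) (dseq d1))
                  (nseq (#|W2| - #|V2|) 0 ++ map (fun z => c * z) (dseq d2)).
  by apply: (perm_trans _ (perm_trans cos' p2')); rewrite perm_sym.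
have cnt P := permP cL P.
have sz1 : size (dseq d1) = #|V1| by rewrite size_map size_enum_ord.
have sz2 : size (dseq d2) = #|V2| by rewrite size_map size_enum_ord.
have cm (D : seq algC) y : count (fun z => c * z == c * y) D = count_mem y D.
  by apply: eq_count => z; rewrite /= (inj_eq (mulfI cn)).
apply/allP => x _; apply/eqP.
have [->|xn] := eqVneq x 0.
  have h1 := count_predC (pred1 0) (dseq d1).
  have h2 := count_predC (pred1 0) (dseq d2).
  have := cnt (predC1 0); rewrite !count_L /= eqxx mul0n !add0n.
  have cp (D : seq algC) : count (fun y => c * y != 0) D = count (predC (pred1 0)) D.
    by apply: eq_count => z; rewrite /= mulf_eq0 (negbTE cn).
  rewrite !cp => E.
  have s12 : size (dseq d1) = size (dseq d2) by rewrite sz1 sz2.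
  apply/eqP; rewrite -(eqn_add2r (count (predC (pred1 0)) (dseq d2))) h2.
  by rewrite -{1}E h1 s12.
have := cnt (pred1 (c * x)); rewrite !count_L /= !cm.
by rewrite eq_sym mulf_eq0 (negbTE cn) (negbTE xn) !mul0n !add0n => ->.
Qed.


Lemma Sp_char G (theta : 'I_(sg_n G) -> 'I_(sg_m G) -> int) p : (0 < p)%N ->
  'X^#|Sp_vertex G 1| * char_poly (adjmx (Sp_adj theta p)) =
  'X^#|Sp_vertex G p| * char_poly (sqrtC (1 * p)%:R *: adjmx (S_adj theta)).
Proof.
move=> p0.
apply: (bip_blowup (pi := @piS _ _ _ _ id) (dV := 1) (dE := p)) => //.
- by case=> [v|[e t]] [v'|[e' t']].
- by move=> [e t] [e' t'].
- move=> v; rewrite fiber_inl -(card1 v); apply: eq_card => a; by rewrite !inE.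
- by move=> e; rewrite fiber_inr card_ord.
Qed.

Lemma Spk_char G (theta : 'I_(sg_n G) -> 'I_(sg_m G) -> int) p k :
  'X^#|Sp_vertex G 1| * char_poly (adjmx (Spk_adj theta p k)) =
  'X^#|Spk_vertex G p k| * char_poly (sqrtC (p.+1 * k.+1)%:R *: adjmx (S_adj theta)).
Proof.
apply: (bip_blowup (pi := @piS _ _ _ _ fst) (dV := p.+1) (dE := k.+1)) => //.
- by case=> [[v s]|[e t]] [[v' s']|[e' t']].
- by move=> [e t] [e' t'].
- by move=> v; rewrite fiber_inl (card_fst _ v) card_ord.
- by move=> e; rewrite fiber_inr card_ord.
Qed.

Lemma card_Sp G p : #|Sp_vertex G p| = (sg_n G + sg_m G * p)%N.
Proof. by rewrite /Sp_vertex card_sum card_prod !card_ord. Qed.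

Lemma card_Spk G p k : #|Spk_vertex G p k| = (sg_n G * p.+1 + sg_m G * k.+1)%N.
Proof. by rewrite /Spk_vertex card_sum !card_prod !card_ord. Qed.

Close Scope sesquilinear_scope.

Theorem corollary4p11 (G1 G2 : signed_graph)
  (theta1 : 'I_(sg_n G1) -> 'I_(sg_m G1) -> int)
  (theta2 : 'I_(sg_n G2) -> 'I_(sg_m G2) -> int) :
  wf_signed_graph G1 -> wf_signed_graph G2 ->
  orientation theta1 -> orientation theta2 ->
  ~ cospectral (S_adj theta1) (S_adj theta2) ->
  equienergetic (S_adj theta1) (S_adj theta2) ->
  forall p k : nat, (0 < p)%N -> (k = p \/ k = p.-1) ->
  (~ cospectral (Sp_adj theta1 p) (Sp_adj theta2 p) /\
   equienergetic (Sp_adj theta1 p) (Sp_adj theta2 p)) /\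
  (~ cospectral (Spk_adj theta1 p k) (Spk_adj theta2 p k) /\
   equienergetic (Spk_adj theta1 p k) (Spk_adj theta2 p k)).
Proof.
move=> wf1 wf2 or1 or2 ncos eqe p k p0 _.
split.
- apply: (transfer (c := sqrtC (1 * p)%:R) (m1 := sg_m G1) (m2 := sg_m G2)
    _ _ _ (trace_S wf1 or1) (trace_S wf2 or2) _ _ (Sp_char theta1 p0) (Sp_char theta2 p0)) => //.
  + by rewrite sqrtC_gt0 ltr0n mul1n.
  + exact: Sp_sym.
  + exact: Sp_sym.
  + by rewrite !card_Sp leq_add2l leq_mul2l p0 orbT.
  + by rewrite !card_Sp leq_add2l leq_mul2l p0 orbT.
  + by rewrite !card_Sp => <-; rewrite !muln1 => /eqP; rewrite eqn_add2r => /eqP ->.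
- apply: (transfer (c := sqrtC (p.+1 * k.+1)%:R) (m1 := sg_m G1) (m2 := sg_m G2)
    _ _ _ (trace_S wf1 or1) (trace_S wf2 or2) _ _ (Spk_char theta1 p k) (Spk_char theta2 p k)) => //.
  + by rewrite sqrtC_gt0 ltr0n.
  + exact: Sp_sym.
  + exact: Sp_sym.
  + by rewrite card_Sp card_Spk; apply: leq_add; rewrite ?muln1 ?leq_pmulr.
  + by rewrite card_Sp card_Spk; apply: leq_add; rewrite ?muln1 ?leq_pmulr.
  + rewrite !card_Sp !card_Spk => <- /eqP; rewrite eqn_add2r eqn_mul2r /= => /eqP ->.
    by [].
Qed.
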